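(* Let $n\ge 2$. Then $\Gamma^0=\mathrm{C}^\times$, and $$\Gamma^n=\begin{cases}\mathrm{C}^\times, & n \text{ odd},\\ \mathrm{C}^{\times(0)}\cup\mathrm{C}^{\times(1)}, & n\text{ even}.\end{cases}$$
   Context: Let $\mathrm{C}$ be either the real Clifford algebra $C\ell_{p,q}$ with $p+q=n$, or the complex Clifford algebra $C\ell(\mathbb{C}^n)$. It has identity $e$ and generators $e_1,\dots,e_n$ satisfying $e_ae_b+e_be_a=2\eta_{ab}e$. In the real case $\eta=\mathrm{diag}(1,\dots,1,-1,\dots,-1)$ with $p$ entries $+1$ and $q$ entries $-1$. In the complex case $\eta=I_n$. For $a_1<\dots<a_k$ write $e_{a_1\dots a_k}=e_{a_1}\cdots e_{a_k}$. $\mathrm{C}^k$ (grade $k$, $0\le k\le n$) is the span of the $e_{a_1\dots a_k}$ with $k$ indices; $\mathrm{C}^0=\mathrm{span}(e)$. The even subspace is $\mathrm{C}^{(0)}=\bigoplus_{k\text{ even}}\mathrm{C}^k$ and the odd subspace is $\mathrm{C}^{(1)}=\bigoplus_{k\text{ odd}}\mathrm{C}^k$. For any subset $S\subseteq\mathrm{C}$, $S^\times$ denotes the set of elements of $S$ invertible in $\mathrm{C}$; in particular $\mathrm{C}^{\times(j)}:=(\mathrm{C}^{(j)})^\times$. For $k=0,\dots,n$ define $\Gamma^k=\{T\in\mathrm{C}^\times: T\,\mathrm{C}^k\,T^{-1}\subseteq\mathrm{C}^k\}$. *)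

(* Defs.v *)
(* Clifford algebras C\ell(K^n, eta) for a diagonal metric
   eta : 'I_n -> K, realised concretely on the basis of blades e_A, A : {set 'I_n}. *)
From HB Require Import structures.
From mathcomp Require Import all_boot all_order all_algebra.
From mathcomp Require Import reals.
From mathcomp Require Import complex.
Set Implicit Arguments. Unset Strict Implicit. Unset Printing Implicit Defensive.
Import Order.TTheory GRing.Theory Num.Theory.
Local Open Scope ring_scope.

(* An element of the Clifford algebra: its coordinates on the blade basis
   e_A = e_{a_1} ... e_{a_k}  (a_1 < ... < a_k, A = {a_1,...,a_k}, e_set0 = e). *)
Definition cl (K : fieldType) (n : nat) := {ffun {set 'I_n} -> K}.

(* e_A e_B = blade_sign A B * e_{A Δ B}:
   (-1)^#{(a,b) | a in A, b in B, b < a} * prod_{i in A ∩ B} eta_ii *)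
Definition blade_sign (K : fieldType) (n : nat) (eta : 'I_n -> K)
    (A B : {set 'I_n}) : K :=
  (-1) ^+ #|[set ab : 'I_n * 'I_n | (ab.1 \in A) && (ab.2 \in B) && (ab.2 < ab.1)%N]|
  * \prod_(i in A :&: B) eta i.

Definition symdiff (n : nat) (A B : {set 'I_n}) : {set 'I_n} :=
  (A :\: B) :|: (B :\: A).

Definition clmul (K : fieldType) (n : nat) (eta : 'I_n -> K) (x y : cl K n) : cl K n :=
  [ffun C => \sum_(A : {set 'I_n}) \sum_(B : {set 'I_n} | symdiff A B == C)
               x A * y B * blade_sign eta A B].

Definition clone (K : fieldType) (n : nat) : cl K n :=
  [ffun A => if A == set0 then 1 else 0].

Definition clinverse (K : fieldType) (n : nat) (eta : 'I_n -> K) (T S : cl K n) : Prop :=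
  clmul eta T S = clone K n /\ clmul eta S T = clone K n.

Definition clunit (K : fieldType) (n : nat) (eta : 'I_n -> K) (T : cl K n) : Prop :=
  exists S, clinverse eta T S.

Definition in_grade (K : fieldType) (n : nat) (k : nat) (x : cl K n) : Prop :=
  forall A : {set 'I_n}, #|A| != k -> x A = 0.

Definition in_even (K : fieldType) (n : nat) (x : cl K n) : Prop :=
  forall A : {set 'I_n}, odd #|A| -> x A = 0.
Definition in_odd (K : fieldType) (n : nat) (x : cl K n) : Prop :=
  forall A : {set 'I_n}, ~~ odd #|A| -> x A = 0.

Definition Gamma (K : fieldType) (n : nat) (eta : 'I_n -> K) (k : nat) (T : cl K n) : Prop :=
  exists S, clinverse eta T S /\
    forall X : cl K n, in_grade k X -> in_grade k (clmul eta (clmul eta T X) S).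

(* Real signature (p,q), p + q = n: eta = diag(1,..,1,-1,..,-1) with p entries +1. *)
Definition real_eta (R : realType) (n p : nat) : 'I_n -> R :=
  fun i => if (i < p)%N then 1 else -1.

Definition complex_eta (R : realType) (n : nat) : 'I_n -> R[i] := fun _ => 1.
Arguments real_eta R n p : clear implicits.
Arguments complex_eta R n : clear implicits.

(* Main.v *)
Require Import Defs.
From HB Require Import structures.
From mathcomp Require Import all_boot all_order all_algebra.
From mathcomp Require Import reals.
From mathcomp Require Import complex.
From mathcomp Require Import zify ring.
Set Implicit Arguments. Unset Strict Implicit. Unset Printing Implicit Defensive.
Import Order.TTheory GRing.Theory Num.Theory.
Local Open Scope ring_scope.

Section Cl.
Variable K : fieldType.
Variable n : nat.
Variable eta : 'I_n -> K.

Local Notation sd := (@symdiff n).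
Local Notation sg := (blade_sign eta).
Local Notation mul := (clmul eta).

Lemma in_sd (A B : {set 'I_n}) x : (x \in sd A B) = (x \in A) (+) (x \in B).
Proof. by rewrite /symdiff !inE; case: (x \in A); case: (x \in B). Qed.

Lemma sdK (A C : {set 'I_n}) : sd A (sd A C) = C.
Proof. by apply/setP => x; rewrite !in_sd; case: (x \in A); case: (x \in C). Qed.

Lemma sdC (A C : {set 'I_n}) : sd A C = sd C A.
Proof. by apply/setP => x; rewrite !in_sd addbC. Qed.

Lemma sdA (A B C : {set 'I_n}) : sd (sd A B) C = sd A (sd B C).
Proof. by apply/setP => x; rewrite !in_sd addbA. Qed.

Lemma sd0 (A : {set 'I_n}) : sd set0 A = A.
Proof. by apply/setP => x; rewrite !in_sd inE. Qed.

Lemma sdA0 (A : {set 'I_n}) : sd A set0 = A.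
Proof. by apply/setP => x; rewrite !in_sd inE addbF. Qed.

Lemma sdxx (A : {set 'I_n}) : sd A A = set0.
Proof. by apply/setP => x; rewrite !in_sd inE addbb. Qed.

Lemma sd_swap (A B D : {set 'I_n}) : sd (sd A B) D = sd B (sd A D).
Proof. by apply/setP => i; rewrite !in_sd; case: (i \in A); case: (i \in B); case: (i \in D). Qed.

Lemma sd_inj (A : {set 'I_n}) : injective (sd A).
Proof. by move=> B C h; rewrite -(sdK A B) h sdK. Qed.

Lemma clmulE (x y : cl K n) C : mul x y C = \sum_A x A * y (sd A C) * sg A (sd A C).
Proof.
rewrite ffunE; apply: eq_bigr => A _.
rewrite (big_pred1 (sd A C)) // => B /=.
apply/eqP/eqP => [<-|->]; first by rewrite sdK.
by rewrite sdK.
Qed.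

Definition cnt (A B : {set 'I_n}) : nat :=
  #|[set ab : 'I_n * 'I_n | (ab.1 \in A) && (ab.2 \in B) && (ab.2 < ab.1)%N]|.

Lemma cntE A B : cnt A B = (\sum_a \sum_b ((a \in A) && (b \in B) && (b < a)%N : nat))%N.
Proof.
rewrite /cnt -sum1_card big_mkcond /= pair_big /=.
by apply: eq_bigr => [[a b]] _; rewrite inE /=; case: (_ && _).
Qed.


Lemma cnt_sdl A B C : (cnt (sd A B) C + cnt (A :&: B) C + cnt (A :&: B) C = cnt A C + cnt B C)%N.
Proof.
rewrite !cntE -!big_split /=; apply: eq_bigr => a _; rewrite -!big_split /=.
apply: eq_bigr => b _; rewrite in_sd !inE.
by case: (a \in A); case: (a \in B); case: (b \in C); case: (b < a)%N.
Qed.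

Lemma cnt_sdr A B C : (cnt A (sd B C) + cnt A (B :&: C) + cnt A (B :&: C) = cnt A B + cnt A C)%N.
Proof.
rewrite !cntE -!big_split /=; apply: eq_bigr => a _; rewrite -!big_split /=.
apply: eq_bigr => b _; rewrite in_sd !inE.
by case: (a \in A); case: (b \in B); case: (b \in C); case: (b < a)%N.
Qed.

Lemma sign_eq m k m' k' : (m + k + k = m' + k' + k')%N -> (-1) ^+ m = (-1) ^+ m' :> K.
Proof.
move=> h; rewrite -signr_odd -[in RHS]signr_odd.
suff -> : odd m = odd m' by [].
have := congr1 odd h; by rewrite -!addnA !addnn !oddD !odd_double !addbF.
Qed.

Lemma prod_mk (S : {set 'I_n}) : \prod_(i in S) eta i = \prod_i (if i \in S then eta i else 1).
Proof. by rewrite big_mkcond. Qed.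

Lemma sgE A B : sg A B = (-1) ^+ cnt A B * \prod_(i in A :&: B) eta i.
Proof. by []. Qed.

Lemma cocycle A B C : sg A B * sg (sd A B) C = sg A (sd B C) * sg B C.
Proof.
rewrite !sgE.
rewrite mulrACA [RHS]mulrACA -!exprD; congr (_ * _).
  apply: (@sign_eq _ (cnt (A :&: B) C) _ (cnt A (B :&: C))).
  have h1 := cnt_sdl A B C; have h2 := cnt_sdr A B C; lia.
rewrite !prod_mk -!big_split /=; apply: eq_bigr => i _; rewrite !inE ?in_sd.
by case: (i \in A); case: (i \in B); case: (i \in C); rewrite /= ?mulr1 ?mul1r.
Qed.

Lemma clmulA (x y z : cl K n) : mul (mul x y) z = mul x (mul y z).
Proof.
apply/ffunP => D; rewrite !clmulE.
under eq_bigr do rewrite clmulE !big_distrl /=.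
rewrite exchange_big /=; apply: eq_bigr => A _.
rewrite clmulE big_distrr big_distrl /= (reindex_inj (@sd_inj A)) /=.
apply: eq_bigr => B _; rewrite sdK.
have e : sd (sd A B) D = sd B (sd A D).
  exact: sd_swap.
rewrite e; have := cocycle A B (sd B (sd A D)); rewrite sdK -e => cc.
transitivity (x A * y B * z (sd (sd A B) D) * (sg A B * sg (sd A B) (sd (sd A B) D))).
  ring.
rewrite cc; ring.
Qed.


Lemma mulBl (x y : cl K n) C A0 : (forall A, A != A0 -> x A = 0) ->
  mul x y C = x A0 * y (sd A0 C) * sg A0 (sd A0 C).
Proof.
move=> h; rewrite clmulE (bigD1 A0) //= big1 ?addr0 // => A /h ->.
by rewrite !mul0r.
Qed.

Lemma mulBr (x y : cl K n) C B0 : (forall B, B != B0 -> y B = 0) ->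
  mul x y C = x (sd B0 C) * y B0 * sg (sd B0 C) B0.
Proof.
move=> h; rewrite clmulE (bigD1 (sd B0 C)) //=.
rewrite sdA sdxx sdA0 big1 ?addr0 // => A hA.
rewrite h ?mulr0 ?mul0r //; apply: contra hA => /eqP <-.
by rewrite sdA sdxx sdA0.
Qed.

Lemma sgA0 (A : {set 'I_n}) : sg A set0 = 1.
Proof.
rewrite sgE setI0 big_set0 mulr1 /cnt.
suff -> : [set ab : 'I_n * 'I_n | (ab.1 \in A) && (ab.2 \in set0) && (ab.2 < ab.1)%N] = set0.
  by rewrite cards0 expr0.
by apply/setP => -[a b]; rewrite !inE andbF.
Qed.

Lemma mul1 (x : cl K n) : mul x (clone K n) = x.
Proof.
apply/ffunP => C; rewrite (@mulBr _ _ _ set0).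
  by rewrite ffunE eqxx mulr1 sd0 sgA0 mulr1.
by move=> B hB; rewrite ffunE (negbTE hB).
Qed.

Lemma mul_scale_l (x y z : cl K n) C d : (forall B, y B = d * x B) -> mul y z C = d * mul x z C.
Proof.
move=> h; rewrite !clmulE mulr_sumr; apply: eq_bigr => A _; rewrite h; ring.
Qed.

Lemma cnt_T (D : {set 'I_n}) : (cnt D setT + cnt setT D = #|D| * n.-1)%N.
Proof.
rewrite !cntE [X in (_ + X)%N]exchange_big -big_split /=.
rewrite -sum1_card big_distrl [RHS]big_mkcond /=; apply: eq_bigr => a _.
transitivity (\sum_(b < n) ((a \in D) * (b != a)))%N.
  rewrite -big_split; apply: eq_bigr => b _; rewrite !inE /=.
  case: (a \in D) => //=; rewrite neq_ltn.
  case: ltnP => h1; case: ltnP => h2 //=.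
  by have := ltn_trans h1 h2; rewrite ltnn.
case: (a \in D); last by rewrite big1.
rewrite mul1n (eq_bigr (fun b : 'I_n => if b != a then 1 else 0)%N); last first.
  by move=> b _; rewrite mul1n; case: (b != a).
by rewrite -big_mkcond /= sum1_card cardC1 card_ord.
Qed.

Lemma sg_T (D : {set 'I_n}) : sg D setT = (-1) ^+ (#|D| * n.-1) * sg setT D.
Proof.
rewrite !sgE setIT setTI mulrA -exprD; congr (_ * _).
apply: (@sign_eq _ (cnt setT D) _ 0); have := cnt_T D; lia.
Qed.

Lemma sg_nz (A B : {set 'I_n}) : (forall i, eta i != 0) -> sg A B != 0.
Proof.
move=> h; rewrite sgE mulf_neq0 ?signr_eq0 //.
by apply/prodf_neq0 => i _.
Qed.


Lemma key (T X : cl K n) : (forall A, A != setT -> X A = 0) ->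
  mul T X = mul X [ffun B : {set 'I_n} => (-1) ^+ (#|B| * n.-1) * T B].
Proof.
move=> h; apply/ffunP => C.
rewrite (@mulBr T X C setT h) (@mulBl X _ C setT h) ffunE sg_T; ring.
Qed.

Lemma suppT (X : cl K n) : in_grade n X -> forall A, A != setT -> X A = 0.
Proof.
move=> h A hA; apply: h; apply: contra hA => /eqP hc.
by rewrite eqEcard subsetT cardsT card_ord hc leqnn.
Qed.

Lemma notT_sd (C : {set 'I_n}) : C != setT -> sd setT C != set0.
Proof.
apply: contra => /eqP h; apply/eqP; apply: (@sd_inj setT); by rewrite h sdxx.
Qed.

Lemma epsE (B : {set 'I_n}) : (0 < n)%N ->
  (-1) ^+ (#|B| * n.-1) = (if odd #|B| && ~~ odd n then -1 else 1) :> K.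
Proof.
move=> hn; have e : odd n = ~~ odd n.-1 by rewrite -{1}(prednK hn).
by rewrite -signr_odd oddM e negbK; case: (_ && _).
Qed.

Lemma Gamma0_gen (T : cl K n) : Gamma eta 0 T <-> clunit eta T.
Proof.
split; first by case=> S [hS _]; exists S.
case=> S hS; exists S; split => // X hX C hC.
have sX : forall A, A != set0 -> X A = 0.
  by move=> A hA; apply: hX; rewrite cards_eq0.
rewrite (@mul_scale_l T _ S C (X set0)); last first.
  by move=> B; rewrite (@mulBr T X B set0 sX) sd0 sgA0 mulr1 mulrC.
case: hS => -> _; rewrite ffunE; case: eqP => [e|]; last by rewrite mulr0.
by move: hC; rewrite e cards0.
Qed.

Lemma suff_dir (T S : cl K n) (d : K) : clinverse eta T S ->
  (forall B : {set 'I_n}, (-1) ^+ (#|B| * n.-1) * T B = d * T B) ->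
  forall X, in_grade n X -> in_grade n (mul (mul T X) S).
Proof.
move=> [hTS hST] hd X hX C hC.
have sX := suppT hX.
rewrite (@key T X sX) clmulA (@mulBl X _ C setT sX).
rewrite (@mul_scale_l T _ S _ d); last by move=> B; rewrite ffunE hd.
rewrite hTS ffunE.
have hC' : C != setT by apply: contra hC => /eqP ->; rewrite cardsT card_ord.
by rewrite (negbTE (notT_sd hC')) !mulr0 mul0r.
Qed.


Lemma nec_dir (T S : cl K n) : (0 < n)%N -> (forall i, eta i != 0) ->
  (2%:R : K) != 0 -> ~~ odd n -> clinverse eta T S ->
  (forall X, in_grade n X -> in_grade n (mul (mul T X) S)) -> in_even T \/ in_odd T.
Proof.
move=> hn hnz h2 hev [hTS hST] hG.
pose J : cl K n := [ffun A => if A == setT then 1 else 0].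
have sJ : forall A, A != setT -> J A = 0 by move=> A hA; rewrite ffunE (negbTE hA).
have gJ : in_grade n J.
  move=> A hA; apply: sJ; apply: contra hA => /eqP ->; by rewrite cardsT card_ord.
have sY := suppT (hG J gJ).
set Y := mul (mul T J) S in sY.
have eY : mul Y T = mul J [ffun B : {set 'I_n} => (-1) ^+ (#|B| * n.-1) * T B].
  by rewrite /Y (@key T J sJ) clmulA hST mul1.
have hD : forall D : {set 'I_n}, (-1) ^+ (#|D| * n.-1) * T D = Y setT * T D.
  move=> D; have := congr1 (fun f : cl K n => f (sd setT D)) eY => /=.
  rewrite (@mulBl Y T _ setT sY) (@mulBl J _ _ setT sJ) sdK !ffunE eqxx mul1r.
  by move/(mulIf (sg_nz _ _ hnz)) ->.
have [/existsP [D /andP [hD1 hD2]] | hno] :=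
  boolP [exists D : {set 'I_n}, ~~ odd #|D| && (T D != 0)].
  left.
  have y1 : Y setT = 1.
    have := hD D; rewrite epsE // (negbTE hD1) /= mul1r.
    by rewrite -{1}(mul1r (T D)) => /(mulIf hD2) <-.
  move=> A hA; have := hD A; rewrite epsE // hA hev /= y1 mul1r mulN1r.
  move/eqP; rewrite eq_sym -subr_eq0 opprK -mulr2n -mulr_natr mulf_eq0 (negbTE h2) orbF.
  by move/eqP.
right; move=> A hA; apply/eqP; apply: contraNT hno => hT; apply/existsP; exists A.
by rewrite hA hT.
Qed.

Lemma GammaN_gen (T : cl K n) : (0 < n)%N -> (forall i, eta i != 0) ->
  (2%:R : K) != 0 ->
  Gamma eta n T <-> (if odd n then clunit eta T else clunit eta T /\ (in_even T \/ in_odd T)).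
Proof.
move=> hn hnz h2; split.
  case=> S [hS hG]; have hu : clunit eta T by exists S.
  case: ifP => ho //; split => //; exact: (@nec_dir T S hn hnz h2 (negbT ho) hS hG).
move=> H; suff : clunit eta T /\ exists d, forall B : {set 'I_n}, (-1) ^+ (#|B| * n.-1) * T B = d * T B.
  by move=> [[S hS] [d hd]]; exists S; split => //; exact: (@suff_dir T S d).
move: H; case: ifP => ho.
  by move=> hu; split => //; exists 1 => B; rewrite epsE // ho andbF.
move=> [hu [he|hod]]; split => //.
  exists 1 => B; rewrite epsE // ho /= andbT; case hB : (odd #|B|) => //.
  by rewrite he ?hB // !mulr0.
exists (-1) => B; rewrite epsE // ho /= andbT; case hB : (odd #|B|) => //.
by rewrite hod ?hB // !mulr0.
Qed.

End Cl.

Lemma two_nz_num (R : numDomainType) : (2%:R : R) != 0.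
Proof. by rewrite pnatr_eq0. Qed.

Theorem mainTheorem1 (n : nat) (Hn : (2 <= n)%N) :
  (* real Clifford algebra C\ell_{p,q}, p + q = n *)
  (forall (R : realType) (p q : nat), (p + q)%N = n ->
     (forall T : cl R n, Gamma (real_eta R n p) 0 T <-> clunit (real_eta R n p) T) /\
     (forall T : cl R n, Gamma (real_eta R n p) n T <->
        (if odd n then clunit (real_eta R n p) T
         else clunit (real_eta R n p) T /\ (in_even T \/ in_odd T)))) /\
  (* complex Clifford algebra C\ell(C^n) *)
  (forall (R : realType),
     (forall T : cl R[i] n, Gamma (complex_eta R n) 0 T <-> clunit (complex_eta R n) T) /\
     (forall T : cl R[i] n, Gamma (complex_eta R n) n T <->
        (if odd n then clunit (complex_eta R n) T
         else clunit (complex_eta R n) T /\ (in_even T \/ in_odd T)))).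
Proof.
have hn : (0 < n)%N by apply: leq_trans Hn.
split.
  move=> R p q _; split => T; first exact: Gamma0_gen.
  apply: GammaN_gen => //; last exact: two_nz_num.
  by move=> i; rewrite /real_eta; case: ifP => _; rewrite ?oppr_eq0 oner_eq0.
move=> R; split => T; first exact: Gamma0_gen.
apply: GammaN_gen => //; last exact: two_nz_num.
by move=> i; rewrite /complex_eta oner_eq0.
Qed.
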